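(* Let $X$ be a Baire topological space, $Y$ a metric space and $\mathcal F\subseteq Y^X$. (1) If $\mathcal F$ is equi-cliquish, then $EC(\mathcal F)$ is a dense $G_\delta$ subset of $X$; in particular this holds if $\mathcal F$ is equi-GLP. (2) If $X$ is a metric space and $\mathcal F$ is equi-Baire 1, then $EC(\mathcal F)$ is a dense $G_\delta$ subset of $X$.
   Context: $EC(\mathcal F)$ denotes the set of points $x\in X$ at which $\mathcal F$ is equicontinuous: for every $\varepsilon>0$ there is a neighborhood $U$ of $x$ with $d(f(x'),f(x))<\varepsilon$ for all $x'\in U$, $f\in\mathcal F$. A space is Baire if every nonempty open subset is nonmeager. A family of subsets of $X$ is discrete if each point has a neighborhood meeting at most one member; $\sigma$-discrete if it is a countable union of discrete families. $\mathcal F\subseteq Y^X$ (with $(Y,d)$ metric) is equi-GLP if for every $\varepsilon>0$ there is a $\sigma$-discrete family $\mathcal A_\varepsilon$ of closed subsets of $X$ with $X=\bigcup\mathcal A_\varepsilon$ and $\operatorname{diam}f(A)\le\varepsilon$ for all $A\in\mathcal A_\varepsilon$ and all $f\in\mathcal F$; equi-cliquish if for every $\varepsilon>0$ and every nonempty open $U\subseteq X$ there is a nonempty open $O\subseteq U$ with $\operatorname{diam}f(O)<\varepsilon$ for all $f\in\mathcal F$; for $X$ metric with metric $\rho$, equi-Baire 1 if for every $\varepsilon>0$ there is $\delta_\varepsilon\colon X\to(0,\infty)$ such that for all $x,y\in X$ and $f\in\mathcal F$, $\rho(x,y)<\min\{\delta_\varepsilon(x),\delta_\varepsilon(y)\}$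 implies $d(f(x),f(y))<\varepsilon$. *)

(* Defs.v *)
From HB Require Import structures.
From mathcomp Require Import all_boot all_order all_algebra.
From mathcomp Require Import all_classical all_reals.
From mathcomp Require Import topology ereal normedtype borel_hierarchy.
Set Implicit Arguments. Unset Strict Implicit. Unset Printing Implicit Defensive.
Import Order.TTheory GRing.Theory Num.Theory.
Local Open Scope classical_set_scope.
Local Open Scope ring_scope.

Definition is_metric (R : realType) (Y : Type) (d : Y -> Y -> R) : Prop :=
  [/\ forall x y, 0 <= d x y,
      forall x y, d x y = 0 <-> x = y,
      forall x y, d x y = d y x &
      forall x y z, d x z <= d x y + d y z].

Definition metric_induces_topology (R : realType) (X : topologicalType)
  (rho : X -> X -> R) : Prop :=
  forall A : set X, open A <->
    (forall x, A x -> exists2 e : R, 0 < e & [set y | rho x y < e] `<=` A).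

(* diameter (in the extended reals; diam of the empty set is -oo) *)
Definition diam (R : realType) (Y : Type) (d : Y -> Y -> R) (S : set Y) : \bar R :=
  ereal_sup [set (d a b)%:E | a in S & b in S].

Definition nowhere_dense (T : topologicalType) (A : set T) : Prop :=
  interior (closure A) = set0.

Definition meager (T : topologicalType) (A : set T) : Prop :=
  exists2 F : nat -> set T, (forall n, nowhere_dense (F n)) & A `<=` \bigcup_n F n.

Definition baire_space (T : topologicalType) : Prop :=
  forall U : set T, open U -> U !=set0 -> ~ meager U.

Definition EC (R : realType) (X : topologicalType) (Y : Type) (d : Y -> Y -> R)
  (F : set (X -> Y)) : set X :=
  [set x | forall e : R, 0 < e -> exists2 U : set X, nbhs x U &
     forall x' f, U x' -> F f -> d (f x') (f x) < e].

Definition discrete_family (X : topologicalType) (A : set (set X)) : Prop :=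
  forall x : X, exists2 U : set X, nbhs x U &
    forall B C, A B -> A C -> B `&` U !=set0 -> C `&` U !=set0 -> B = C.

Definition sigma_discrete (X : topologicalType) (A : set (set X)) : Prop :=
  exists2 G : nat -> set (set X), (forall n, discrete_family (G n)) &
    A = \bigcup_n G n.

Definition equi_GLP (R : realType) (X : topologicalType) (Y : Type)
  (d : Y -> Y -> R) (F : set (X -> Y)) : Prop :=
  forall e : R, 0 < e -> exists A : set (set X),
    [/\ sigma_discrete A, (forall B, A B -> closed B),
        setT = \bigcup_(B in A) B &
        forall B f, A B -> F f -> (diam d (f @` B) <= e%:E)%E].

Definition equi_cliquish (R : realType) (X : topologicalType) (Y : Type)
  (d : Y -> Y -> R) (F : set (X -> Y)) : Prop :=
  forall (e : R) (U : set X), 0 < e -> open U -> U !=set0 ->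
    exists O : set X, [/\ open O, O !=set0, O `<=` U &
      forall f, F f -> (diam d (f @` O) < e%:E)%E].

Definition equi_Baire1 (R : realType) (X : Type) (Y : Type)
  (rho : X -> X -> R) (d : Y -> Y -> R) (F : set (X -> Y)) : Prop :=
  forall e : R, 0 < e -> exists2 delta : X -> R, (forall x, 0 < delta x) &
    forall x y f, F f -> rho x y < Num.min (delta x) (delta y) -> d (f x) (f y) < e.

(* Main.v *)
Require Import Defs.
From HB Require Import structures.
From mathcomp Require Import all_boot all_order all_algebra.
From mathcomp Require Import all_classical all_reals.
From mathcomp Require Import topology ereal normedtype borel_hierarchy.
From mathcomp Require Import ring.
Import Order.TTheory GRing.Theory Num.Theory.
Local Open Scope classical_set_scope.
Local Open Scope ring_scope.

Lemma small_inv {R : realType} {e : R} : 0 < e -> exists n : nat, n.+1%:R^-1 < e.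
Proof. by move=> /ltr_add_invr [k]; rewrite add0r => h; exists k. Qed.

Definition oscP (R : realType) (X : topologicalType) (Y : Type)
  (d : Y -> Y -> R) (F : set (X -> Y)) :=
  forall e : R, 0 < e -> forall W : set X, open W -> W !=set0 ->
    exists O : set X, [/\ open O, O !=set0, O `<=` W &
      forall f x y, F f -> O x -> O y -> d (f x) (f y) < e].


Arguments oscP {R X Y}.

Lemma core (R : realType) (X : topologicalType) (Y : Type)
  (d : Y -> Y -> R) (F : set (X -> Y)) :
  is_metric d -> baire_space X -> oscP d F -> Gdelta (EC d F) /\ dense (EC d F).
Proof.
move=> [d0 dE dC dT] bX osc.
pose G n := [set x : X | exists U : set X, [/\ open U, U x &
   forall f a b, F f -> U a -> U b -> d (f a) (f b) < n.+1%:R^-1]].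
have Gopen n : open (G n).
  rewrite openE => x [U [oU Ux hU]].
  apply: (@filterS _ _ _ U); last exact: open_nbhs_nbhs.
  by move=> y Uy; exists U.
have ECE : EC d F = \bigcap_n G n.
  apply/seteqP; split.
    move=> x ECx n _.
    have [U nU hU] := ECx (n.+1%:R^-1 / 2) ltac:(by rewrite divr_gt0).
    move: nU; rewrite nbhsE => -[B [oB Bx] BU].
    exists B; split => // f a b Ff Ba Bb.
    apply: (le_lt_trans (dT _ (f x) _)).
    rewrite (dC (f x)) [X in _ < X](splitr (n.+1%:R^-1)).
    by rewrite ltrD // hU //; apply: BU.
  move=> x Gx e e0.
  have [n hn] := small_inv e0.
  have [U [oU Ux hU]] := Gx n I.
  exists U; first exact: open_nbhs_nbhs.
  by move=> x' f Ux' Ff; apply: lt_trans hn; apply: hU.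
split; first by exists G.
move=> O O0 oO; apply/set0P/negP => /eqP OE.
apply: (bX O oO O0).
exists (fun n => ~` G n).
  move=> n; rewrite /nowhere_dense.
  have <- : ~` G n = closure (~` G n) by apply/closure_id; rewrite closedC.
  apply/seteqP; split => // p Ip.
  have [|O' [oO' [q O'q] O'sub hO']] := osc (n.+1%:R^-1) ltac:(by []) _
     (@open_interior _ (~` G n)).
    by exists p.
  by apply: (interior_subset (O'sub q O'q)); exists O'.
move=> x Ox; have nx : ~ (\bigcap_n G n) x.
  move=> h; have : (O `&` EC d F) x by split => //; rewrite ECE.
  by rewrite OE.
move: nx => /existsNP [n hn]; exists n => // Gx; exact: hn.
Qed.

Lemma baire_cover (X : topologicalType) (W : set X) (A : nat -> set X) :
  baire_space X -> open W -> W !=set0 -> W `<=` \bigcup_n A n ->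
  exists n, exists V : set X, [/\ open V, V !=set0, V `<=` W & V `<=` closure (A n)].
Proof.
move=> bX oW W0 WA; apply: contrapT => hno.
apply: (bX W oW W0); exists (fun n => A n `&` W); last first.
  by move=> x Wx; have [n _ Anx] := WA x Wx; exists n.
move=> n; rewrite /nowhere_dense; apply/seteqP; split => // p Ip.
apply: hno; exists n.
have [q [[Aq Wq] Iq]] := interior_subset Ip _ (nbhs_interior Ip).
exists ((closure (A n `&` W))° `&` W); split.
- exact: openI (@open_interior _ _) oW.
- by exists q; split.
- by move=> y [].
- move=> y [/interior_subset Cy _]; apply: closureS Cy; exact: subIsetl.
Qed.

Lemma diam_ub (R : realType) (Y : Type) (d : Y -> Y -> R) (S : set Y) a b :
  S a -> S b -> ((d a b)%:E <= diam d S)%E.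
Proof.
move=> Sa Sb; apply: ereal_sup_ubound; by exists a => //; exists b.
Qed.

Lemma cliquish_osc (R : realType) (X : topologicalType) (Y : Type)
  (d : Y -> Y -> R) (F : set (X -> Y)) : equi_cliquish d F -> oscP d F.
Proof.
move=> h e e0 W oW W0; have [O [oO O0 OW hO]] := h e W e0 oW W0.
exists O; split => // f x y Ff Ox Oy.
rewrite -lte_fin; apply: le_lt_trans (hO f Ff).
by apply: diam_ub; [exists x|exists y].
Qed.

Lemma GLP_osc (R : realType) (X : topologicalType) (Y : Type)
  (d : Y -> Y -> R) (F : set (X -> Y)) :
  baire_space X -> equi_GLP d F -> oscP d F.
Proof.
move=> bX h e e0 W oW W0.
have [A [[G disc AG] Acl cov hA]] := h (e / 2) ltac:(by rewrite divr_gt0).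
pose An n := \bigcup_(B in G n) B.
have WA : W `<=` \bigcup_n An n.
  move=> x _; have : (\bigcup_(B in A) B) x by rewrite -cov.
  move=> [B]; rewrite AG => -[n _ GB] Bx; exists n => //; by exists B.
have [n [V [oV [p Vp] VW VA]]] := @baire_cover X W An bX oW W0 WA.
have [U nU uni] := disc n p.
pose V' := U° `&` V.
have oV' : open V' by apply: openI => //; exact: open_interior.
have V'p : V' p by split.
have GA B : G n B -> A B by move=> GB; rewrite AG; exists n.
have [q [[B GB Bq] [IUq V'q]]] := VA p Vp V' (open_nbhs_nbhs (conj oV' V'p)).
have BU : B `&` U !=set0 by exists q; split => //; exact: interior_subset.
have V'B : V' `<=` B.
  move=> y V'y; apply: contrapT => nBy.
  have oy : open (V' `&` ~` B) by apply: openI => //; apply: closed_openC; apply: Acl; apply: GA.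
  have [r [[C GC Cr] [[IUr _] nBr]]] :=
    VA y (V'y.2) _ (open_nbhs_nbhs (conj oy (conj V'y nBy))).
  have CU : C `&` U !=set0 by exists r; split => //; exact: interior_subset.
  by apply: nBr; rewrite (uni B C GB GC BU CU).
exists V'; split => //; first by exists p.
  by move=> y [_ /VW].
move=> f x y Ff V'x V'y.
have : ((d (f x) (f y))%:E <= (e / 2)%:E)%E.
  apply: le_trans (hA B f (GA B GB) Ff).
  by apply: diam_ub; [exists x => //; apply: V'B|exists y => //; apply: V'B].
rewrite lee_fin => /le_lt_trans; apply.
by rewrite ltr_pdivrMr // ltr_pMr // ltr1n.
Qed.

Lemma ball_open (R : realType) (X : topologicalType) (rho : X -> X -> R) :
  is_metric rho -> metric_induces_topology rho ->
  forall p r, open [set y | rho p y < r].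
Proof.
move=> [r0 rE rC rT] mt p r; apply/(mt _).2 => x hx.
exists (r - rho p x); first by rewrite subr_gt0.
move=> y /= hy; apply: le_lt_trans (rT p x y) _.
by rewrite -ltrBrDl.
Qed.

Lemma Baire1_osc (R : realType) (X : topologicalType) (Y : Type)
  (d : Y -> Y -> R) (F : set (X -> Y)) (rho : X -> X -> R) :
  is_metric d -> baire_space X -> is_metric rho -> metric_induces_topology rho ->
  equi_Baire1 rho d F -> oscP d F.
Proof.
move=> [d0 dE dC dT] bX mr mt h e e0 W oW W0.
have mr' := mr; move: mr' => [r0 rE rC rT].
have [delta dpos hd] := h (e / 3) ltac:(by rewrite divr_gt0).
pose An n := [set x : X | n.+1%:R^-1 < delta x].
have WA : W `<=` \bigcup_n An n.
  by move=> x _; have [n hn] := small_inv (dpos x); exists n.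
have [n [V [oV [p Vp] VW VA]]] := @baire_cover X W An bX oW W0 WA.
have [r rpos rV] := (mt V).1 oV p Vp.
pose s := Num.min r (n.+1%:R^-1 / 2).
have s0 : 0 < s by rewrite lt_min rpos divr_gt0.
pose O := [set y | rho p y < s].
have OV : O `<=` V by move=> y Oy; apply: rV; apply: lt_le_trans Oy _; rewrite ge_min lexx.
have Oclose u v : O u -> O v -> rho u v < n.+1%:R^-1.
  move=> Ou Ov; apply: le_lt_trans (rT u p v) _.
  rewrite (rC u p) [X in _ < X](splitr (n.+1%:R^-1)).
  by apply: ltrD; [apply: lt_le_trans Ou _|apply: lt_le_trans Ov _]; rewrite ge_min lexx orbT.
have approx x : O x -> exists a, [/\ An n a, O a & rho x a < delta x].
  move=> Ox.
  have sx : 0 < s - rho p x by rewrite subr_gt0.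
  have oB := @ball_open R X rho mr mt x (Num.min (delta x) (s - rho p x)).
  have Bx : rho x x < Num.min (delta x) (s - rho p x).
    by rewrite (proj2 (rE x x) erefl) lt_min dpos sx.
  have [a [Aa Ba]] := VA x (OV x Ox) _ (open_nbhs_nbhs (conj oB Bx)).
  move: Ba; rewrite /= lt_min => /andP [ha1 ha2].
  exists a; split => //.
  by rewrite /O /=; apply: le_lt_trans (rT p x a) _; rewrite -ltrBrDl.
exists O; split.
- exact: (@ball_open R X rho mr mt).
- by exists p; rewrite /O /= (proj2 (rE p p) erefl).
- by move=> y /OV /VW.
move=> f x y Ff Ox Oy.
have [a [Aa Oa xa]] := approx x Ox.
have [b [Ab Ob yb]] := approx y Oy.
have h1 : d (f x) (f a) < e / 3.
  apply: hd => //; rewrite lt_min xa /=.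
  by apply: lt_trans Aa; apply: Oclose.
have h2 : d (f a) (f b) < e / 3.
  apply: hd => //; rewrite lt_min.
  by rewrite (lt_trans (Oclose _ _ Oa Ob) Aa) (lt_trans (Oclose _ _ Oa Ob) Ab).
have h3 : d (f b) (f y) < e / 3.
  apply: hd => //; rewrite lt_min rC yb andbT.
  by apply: lt_trans Ab; apply: Oclose.
apply: le_lt_trans (dT _ (f a) _) _.
apply: le_lt_trans (lerD (lexx _) (dT _ (f b) _)) _.
have -> : e = e / 3 + (e / 3 + e / 3) by field.
by rewrite ltrD // ltrD.
Qed.

Theorem proposition3p7 (R : realType) (X : topologicalType) (Y : Type)
  (d : Y -> Y -> R) (F : set (X -> Y)) :
  is_metric d -> baire_space X ->
  [/\ (equi_cliquish d F -> Gdelta (EC d F) /\ dense (EC d F)),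
      (equi_GLP d F -> Gdelta (EC d F) /\ dense (EC d F)) &
      (forall rho : X -> X -> R, is_metric rho -> metric_induces_topology rho ->
         equi_Baire1 rho d F -> Gdelta (EC d F) /\ dense (EC d F))].
Proof.
move=> md bX; split.
- by move=> h; apply: (@core R X Y d F md bX); apply: cliquish_osc.
- by move=> h; apply: (@core R X Y d F md bX); apply: GLP_osc.
- move=> rho mr mt h; apply: (@core R X Y d F md bX); exact: (@Baire1_osc R X Y d F rho).
Qed.
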